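(* Let $S$ be a finite semigroup with an anti-involution $*$, let $R$ be a commutative ring with $1$, and let $\alpha$ be a twisting from $S$ into $R$ with $\alpha(x,y)=\alpha(y^*,x^* )$ for all $x,y\in S$. Suppose that for each $\mathcal D$-class $D$ there is an idempotent $1_D\in D$ with $1_D^*=1_D$; let $G_D$ be the $\mathcal H$-class of $1_D$. Suppose that for each $\mathcal D$-class $D$ and all $x\,\mathcal L\,1_D$, $y\,\mathcal R\,1_D$, the element $\alpha(x,y)$ is a unit of $R$. Suppose that for each $D$ the twisted group algebra $R^\alpha[G_D]$ (twisting $\alpha|_{G_D\times G_D}$) is cellular with cell datum $(\Lambda_D,M_D,C,* )$, where $*$ is the linear extension of $*|_{G_D}$. Let $\mathcal D$ be the set of $\mathcal D$-classes, $\mathcal L_D$ the set of $\mathcal L$-classes in $D$, $\Lambda=\{(D,\lambda)\mid D\in\mathcal D,\lambda\in\Lambda_D\}$ ordered by $(D_1,\lambda_1)\le(D_2,\lambda_2)$ iff $D_1<_{\mathcal D}D_2$ or ($D_1=D_2$ and $\lambda_1\le\lambda_2$ in $\Lambda_{D_1}$), $M(D,\lambda)=\mathcal L_D\times M_D(\lambda)$, choose for each $L\in\mathcal L_D$ an element $u_L\in L$ with $u_L\,\mathcal R\,1_D$, and set \[C^{(D,\lambda)}_{(L,s)(K,t)}=u_L^*\cdot C^\lambda_{st}\cdot u_K\] (product in $R^\alpha[S]$). Then $R^\alpha[S]$ is cellular with cell datum $(\Lambda,M,C,* )$, where $*$ is the linear extension of $*$ to $R^\alpha[S]$.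
   Context: Green's relations on a semigroup $S$ ($S^1$ = $S$ with identity adjoined): $x\le_{\mathcal R}y$ iff $x\in yS^1$; $x\le_{\mathcal L}y$ iff $x\in S^1y$; $x\le_{\mathcal J}y$ iff $x\in S^1yS^1$; $\mathcal R,\mathcal L,\mathcal J$ the associated equivalences; $\mathcal H=\mathcal R\cap\mathcal L$; $\mathcal D$ generated by $\mathcal R\cup\mathcal L$. For finite $S$, $\mathcal D=\mathcal J$ and $\le_{\mathcal J}$ induces a partial order $\le_{\mathcal D}$ on $\mathcal D$-classes; $<_{\mathcal D}$ is its strict version. An anti-involution of $S$: $(x^* )^*=x$, $(xy)^*=y^*x^*$. A twisting $\alpha:S\times S\to R$ satisfies $\alpha(x,y)\alpha(xy,z)=\alpha(x,yz)\alpha(y,z)$; $R^\alpha[S]$ is the free $R$-module on $S$ with product $x\cdot y=\alpha(x,y)(xy)$. An anti-involution of an $R$-algebra is $R$-linear with $(a^* )^*=a$, $(ab)^*=b^*a^*$. Cellular algebra with cell datum $(\Lambda,M,C,* )$: (C1) $\Lambda$ finite poset, finite sets $M(\lambda)$, and $\{C^\lambda_{st}\}$ an $R$-basis; (C2) $*$ anti-involution with $(C^\lambda_{st})^*=C^\lambda_{ts}$; (C3) for all $\lambda,s,a$ there are $r_a(s',s)\in R$ with $aC^\lambda_{st}\in\sum_{s'}r_a(s',s)C^\lambda_{s't}+A(<\lambda)$ for all $t$, where $A(<\lambda)$ is the span of the $C^\mu_{s''t''}$ with $\mu<\lambda$. *)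

(* Defs.v *)
From HB Require Import structures.
From mathcomp Require Import all_boot all_order all_algebra.
Set Implicit Arguments. Unset Strict Implicit. Unset Printing Implicit Defensive.
Import GRing.Theory.
Local Open Scope ring_scope.

Section Green.
Variables (S : finType) (op : S -> S -> S).

Definition leR (x y : S) : bool := (x == y) || [exists s, x == op y s].
Definition leLg (x y : S) : bool := (x == y) || [exists s, x == op s y].
Definition leJ (x y : S) : bool :=
  [|| x == y, [exists s, x == op s y], [exists s, x == op y s]
    | [exists s, [exists t, x == op (op s y) t]]].
Definition Rrel (x y : S) : bool := leR x y && leR y x.
Definition Lrel (x y : S) : bool := leLg x y && leLg y x.
Definition Hrel (x y : S) : bool := Rrel x y && Lrel x y.
Definition Drel (x y : S) : bool := connect (fun a b => Rrel a b || Lrel a b) x y.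

Definition dclasses : {set {set S}} := [set [set y | Drel x y] | x : S].
Definition hclass (x : S) : {set S} := [set y | Hrel x y].
Definition dle (D1 D2 : {set S}) : bool := [exists x in D1, exists y in D2, leJ x y].
Definition dlt (D1 D2 : {set S}) : bool := dle D1 D2 && (D1 != D2).
Definition lclasses_in (D : {set S}) : {set {set S}} := [set [set y | Lrel x y] | x in D].
End Green.

Notation dcl op := {D : {set _} | D \in dclasses op}.
Notation lcl op D := {L : {set _} | L \in lclasses_in op D}.

(* elements: {ffun S -> R^o}, i.e. sum_x f(x) x ; basis element x is tdelta x *)
Section Twisted.
Variables (R : comPzRingType) (S : finType).

Definition tdelta (x : S) : {ffun S -> R^o} := [ffun z => (z == x)%:R].

(* product: x . y = alpha(x,y) (xy), extended bilinearly *)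
Definition tmul (op : S -> S -> S) (alpha : S -> S -> R) (f g : {ffun S -> R^o})
  : {ffun S -> R^o} :=
  [ffun z => \sum_(x : S) \sum_(y : S)
               (if op x y == z then f x * g y * alpha x y else 0)].

Definition tstar (st : S -> S) (f : {ffun S -> R^o}) : {ffun S -> R^o} :=
  \sum_(x : S) f x *: tdelta (st x).
End Twisted.

(* The algebra is the R-submodule A of V (closed under mul), with product mul. *)
Definition lincomb (R : comPzRingType) (V : lmodType R) (Lam : finType)
  (M : Lam -> finType) (C : forall l, M l -> M l -> V)
  (c : forall l, M l -> M l -> R) : V :=
  \sum_(l : Lam) \sum_(s : M l) \sum_(t : M l) c l s t *: C l s t.

Definition cellular (R : comPzRingType) (V : lmodType R) (A : V -> Prop)
  (mul : V -> V -> V) (star : V -> V)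
  (Lam : finType) (le : Lam -> Lam -> Prop) (M : Lam -> finType)
  (C : forall l, M l -> M l -> V) : Prop :=
  (* C1: finite poset, and {C^l_st} an R-basis of A *)
  [/\ [/\ [/\ (forall l, le l l),
              (forall l m, le l m -> le m l -> l = m) &
              (forall l m n, le l m -> le m n -> le l n)],
          (forall l s t, A (C l s t)),
          (forall v, A v -> exists c, v = lincomb C c) &
          (forall c1 c2, lincomb C c1 = lincomb C c2 ->
             forall l s t, c1 l s t = c2 l s t)],
  (* C2: star is an anti-involution of the algebra with (C^l_st)^* = C^l_ts *)
      [/\ (forall a, A a -> A (star a)),
          (forall k a b, A a -> A b -> star (k *: a + b) = k *: star a + star b),
          (forall a, A a -> star (star a) = a),
          (forall a b, A a -> A b -> star (mul a b) = mul (star b) (star a)) &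
          (forall l s t, star (C l s t) = C l t s)] &
      forall l (s : M l) a, A a ->
        exists r : M l -> R, forall t : M l,
          exists c : forall m, M m -> M m -> R,
            (forall m s'' t'', ~ (le m l /\ m <> l) -> c m s'' t'' = 0) /\
            mul a (C l s t) - \sum_(s' : M l) r s' *: C l s' t = lincomb C c].

Section BigDatum.
Variables (R : comPzRingType) (S : finType) (op : S -> S -> S)
  (alpha : S -> S -> R) (st : S -> S).
Variables (Lam : dcl op -> finType) (leL : forall D, Lam D -> Lam D -> Prop)
  (M : forall D : dcl op, Lam D -> finType)
  (C : forall (D : dcl op) (l : Lam D), M l -> M l -> {ffun S -> R^o})
  (u : forall D : dcl op, lcl op (val D) -> S).

Definition bigle (p q : {D : dcl op & Lam D}) : Prop :=
  dlt op (val (tag p)) (val (tag q)) \/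
  exists D (l1 l2 : Lam D),
    [/\ p = Tagged (fun D => Lam D) l1, q = Tagged (fun D => Lam D) l2 & leL l1 l2].

Definition bigM (p : {D : dcl op & Lam D}) : finType :=
  Finite.clone (lcl op (val (tag p)) * M (tagged p))%type _.

Definition bigC (p : {D : dcl op & Lam D}) (x y : bigM p) : {ffun S -> R^o} :=
  tmul op alpha
    (tmul op alpha (tdelta R (st (u x.1))) (C x.2 y.2))
    (tdelta R (u y.1)).
End BigDatum.

(* Main.v *)
Require Import Defs.
From HB Require Import structures.
From mathcomp Require Import all_boot all_order all_algebra.
From Stdlib Require Import Classical_Prop.
Import GRing.Theory.
Set Implicit Arguments. Unset Strict Implicit. Unset Printing Implicit Defensive.

Section Mon.
Variables (S : finType) (op : S -> S -> S).
Hypothesis opA : forall x y z, op (op x y) z = op x (op y z).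

Definition om (a b : option S) : option S :=
  match a, b with
  | Some x, Some y => Some (op x y)
  | None, _ => b
  | _, None => a
  end.

Lemma omA : associative om.
Proof. by case=> [x|] [y|] [z|] //=; rewrite opA. Qed.
Lemma om1 a : om a None = a. Proof. by case: a. Qed.
Lemma o1m a : om None a = a. Proof. by []. Qed.

Lemma leLP x y : reflect (exists s, Some x = om s (Some y)) (leLg op x y).
Proof.
apply: (iffP orP).
  case=> [/eqP->|/existsP[s /eqP->]]; [by exists None|by exists (Some s)].
case=> [[s|]] /= [->]; [right; apply/existsP; exists s|left]; done.
Qed.

Lemma leRP x y : reflect (exists s, Some x = om (Some y) s) (leR op x y).
Proof.
apply: (iffP orP).
  case=> [/eqP->|/existsP[s /eqP->]]; [by exists None|by exists (Some s)].
case=> [[s|]] /= [->]; [right; apply/existsP; exists s|left]; done.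
Qed.

Lemma leJP x y : reflect (exists s t, Some x = om (om s (Some y)) t) (leJ op x y).
Proof.
apply: (iffP idP).
  case/or4P=> [/eqP->|/existsP[s /eqP->]|/existsP[s /eqP->]|/existsP[s /existsP[t /eqP->]]].
  - by exists None, None.
  - by exists (Some s), None.
  - by exists None, (Some s).
  - by exists (Some s), (Some t).
case=> [[s|]] [[t|]] /= [->]; apply/or4P.
- by constructor 4; apply/existsP; exists s; apply/existsP; exists t.
- by constructor 2; apply/existsP; exists s.
- by constructor 3; apply/existsP; exists t.
- by constructor 1.
Qed.

Lemma leL_refl x : leLg op x x. Proof. by apply/leLP; exists None. Qed.
Lemma leR_refl x : leR op x x. Proof. by apply/leRP; exists None. Qed.
Lemma leJ_refl x : leJ op x x. Proof. by apply/leJP; exists None, None. Qed.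

Lemma leL_trans x y z : leLg op x y -> leLg op y z -> leLg op x z.
Proof.
move=> /leLP[s Hx] /leLP[t Hy]; apply/leLP; exists (om s t).
by rewrite Hx Hy omA.
Qed.
Lemma leR_trans x y z : leR op x y -> leR op y z -> leR op x z.
Proof.
move=> /leRP[s Hx] /leRP[t Hy]; apply/leRP; exists (om t s).
by rewrite Hx Hy omA.
Qed.
Lemma leJ_trans x y z : leJ op x y -> leJ op y z -> leJ op x z.
Proof.
move=> /leJP[s [s' Hx]] /leJP[t [t' Hy]]; apply/leJP; exists (om s t), (om t' s').
by rewrite Hx Hy !omA.
Qed.
Lemma leLJ x y : leLg op x y -> leJ op x y.
Proof. by move=> /leLP[s Hx]; apply/leJP; exists s, None; rewrite om1. Qed.
Lemma leRJ x y : leR op x y -> leJ op x y.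
Proof. by move=> /leRP[s Hx]; apply/leJP; exists None, s. Qed.

Lemma Lrel_refl x : Lrel op x x. Proof. by rewrite /Lrel leL_refl. Qed.
Lemma Rrel_refl x : Rrel op x x. Proof. by rewrite /Rrel leR_refl. Qed.
Lemma Lrel_sym x y : Lrel op x y = Lrel op y x. Proof. by rewrite /Lrel andbC. Qed.
Lemma Rrel_sym x y : Rrel op x y = Rrel op y x. Proof. by rewrite /Rrel andbC. Qed.
Lemma Lrel_trans x y z : Lrel op x y -> Lrel op y z -> Lrel op x z.
Proof.
by case/andP=> h1 h2 /andP[h3 h4]; apply/andP; split; apply: leL_trans; eassumption.
Qed.
Lemma Rrel_trans x y z : Rrel op x y -> Rrel op y z -> Rrel op x z.
Proof.
by case/andP=> h1 h2 /andP[h3 h4]; apply/andP; split; apply: leR_trans; eassumption.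
Qed.

Fixpoint opow (c : option S) n := if n is n'.+1 then om c (opow c n') else None.
Lemma opowD c m n : opow c (m + n) = om (opow c m) (opow c n).
Proof. by elim: m => [|m IH] //=; rewrite IH omA. Qed.
Lemma opowS' c n : opow c n.+1 = om (opow c n) c.
Proof. by rewrite -addn1 opowD /= om1. Qed.

Lemma idem_pow c : exists n, 0 < n /\ om (opow c n) (opow c n) = opow c n.
Proof.
pose f (i : 'I_(#|{: option S}|).+1) := opow c i.
have : ~~ injectiveb f.
  apply/negP=> /injectiveP/leq_card; rewrite card_ord ltnn; done.
case/injectivePn=> i [j Hij Hf].
wlog lt_ij : i j Hij Hf / (i < j)%N.
  move=> W; case: (ltngtP i j) => H; first exact: W Hf H.
  - by apply: (W j i) => //; rewrite eq_sym.
  - by move/val_inj: H Hij => ->; rewrite eqxx.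
rewrite /f in Hf; set p := (j - i)%N.
have Hp : forall k, opow c (i + k) = opow c (i + k + p).
  move=> k; rewrite -addnA (addnC k) addnA /p subnKC ?(ltnW lt_ij) //.
  by rewrite !opowD Hf.
have Hq : forall q k, opow c (i + k) = opow c (i + k + q * p).
  elim=> [|q IH] k; first by rewrite mul0n addn0.
  by rewrite mulSn addnA Hp; have := IH (k + p); rewrite !addnA.
have p0 : (0 < p)%N by rewrite subn_gt0.
exists (i.+1 * p)%N; split; first by rewrite muln_gt0.
rewrite -opowD.
have -> : (i.+1 * p + i.+1 * p = i + (i.+1 * p - i) + i.+1 * p)%N.
  rewrite subnKC //; apply: leq_trans (leqnSn i) _; rewrite -{1}(muln1 i.+1).
  by rewrite leq_mul2l.
rewrite -Hq subnKC //; apply: leq_trans (leqnSn i) _; rewrite -{1}(muln1 i.+1).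
by rewrite leq_mul2l.
Qed.

Lemma stabL a b : leLg op a b -> leJ op b a -> leLg op b a.
Proof.
move=> /leLP[s Ha] /leJP[p [q Hb]].
set c := om p s.
have Hb1 : Some b = om c (om (Some b) q) by rewrite {1}Hb Ha /c !omA.
have Hn : forall n, Some b = om (opow c n) (om (Some b) (opow q n)).
  elim=> [|n IH]; first done.
  rewrite {1}Hb1 {1}IH [opow q n.+1]opowS' -[opow c n.+1]/(om c (opow c n)).
  by rewrite !omA.
have [n [n0 Hid]] := idem_pow c.
have Hcb : om (opow c n) (Some b) = Some b.
  by rewrite {1}(Hn n) omA Hid -Hn.
apply/leLP; case: n n0 Hid Hcb => // n _ _.
move=> Hcb; exists (om (opow c n) p).
by rewrite -{1}Hcb opowS' /c Ha !omA.
Qed.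
End Mon.
Arguments om {S} op a b.

Lemma om_flip (S : finType) (op : S -> S -> S) a b :
  om (fun x y => op y x) a b = om op b a.
Proof. by case: a; case: b. Qed.

Section Green2.
Variables (S : finType) (op : S -> S -> S).
Hypothesis opA : forall x y z, op (op x y) z = op x (op y z).
Let fop := fun x y : S => op y x.
Let fopA : forall x y z, fop (fop x y) z = fop x (fop y z).
Proof. by move=> x y z; rewrite /fop opA. Qed.

Lemma leJ_flip x y : leJ op x y -> leJ fop x y.
Proof.
move=> /leJP[s [t H]]; apply/leJP; exists t, s.
have e : forall a b, om fop a b = om op b a := om_flip op.
by rewrite e e H omA.
Qed.

Lemma stabR a b : leR op a b -> leJ op b a -> leR op b a.
Proof. by move=> H1 /leJ_flip H2; apply: (stabL fopA). Qed.

Lemma connect_ind2 (e : rel S) (P : S -> S -> Prop) :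
  (forall x, P x x) -> (forall x y z, e x y -> P y z -> P x z) ->
  forall x y, connect e x y -> P x y.
Proof.
move=> Pr Pt x y /connectP[p]; elim: p x => [|z p IH] x /=; first by move=> _ ->.
by case/andP=> exz pz ey; apply: Pt exz (IH _ pz ey).
Qed.

Definition DE := fun a b => Rrel op a b || Lrel op a b.
Lemma DE_sym : symmetric DE.
Proof. by move=> a b; rewrite /DE Rrel_sym Lrel_sym. Qed.

Lemma Drel_sym x y : Drel op x y = Drel op y x.
Proof. exact: (sym_connect_sym DE_sym). Qed.
Lemma Drel_trans x y z : Drel op x y -> Drel op y z -> Drel op x z.
Proof. exact: connect_trans. Qed.
Lemma Drel_refl x : Drel op x x.
Proof. exact: connect0. Qed.
Lemma LD x y : Lrel op x y -> Drel op x y.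
Proof. by move=> H; apply: connect1; rewrite /DE H orbT. Qed.
Lemma RD x y : Rrel op x y -> Drel op x y.
Proof. by move=> H; apply: connect1; rewrite /DE H. Qed.

Lemma DJ x y : Drel op x y -> leJ op x y && leJ op y x.
Proof.
apply: (connect_ind2 (P := fun x y => leJ op x y && leJ op y x)).
  by move=> z; rewrite leJ_refl.
move=> a b c /orP[/andP[h1 h2]|/andP[h1 h2]] /andP[h3 h4]; apply/andP; split.
- exact: (leJ_trans opA (leRJ h1) h3).
- exact: (leJ_trans opA h4 (leRJ h2)).
- exact: (leJ_trans opA (leLJ h1) h3).
- exact: (leJ_trans opA h4 (leLJ h2)).
Qed.

Lemma JD x y : leJ op x y -> leJ op y x -> Drel op x y.
Proof.
move=> /leJP[s [t Hx]] Hyx.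
have [z Hz] : exists z, Some z = om op s (Some y).
  by case: s {Hx} => [s|]; [exists (op s y)|exists y].
have zLy : leLg op z y by apply/leLP; exists s.
have xRz : leR op x z by apply/leRP; exists t; rewrite Hz.
have yJz : leJ op y z := leJ_trans opA Hyx (leRJ xRz).
have yLz := stabL opA zLy yJz.
have zJx : leJ op z x := leJ_trans opA (leLJ zLy) Hyx.
have zRx := stabR xRz zJx.
apply: (Drel_trans (y := z)); first by apply: RD; rewrite /Rrel xRz.
by apply: LD; rewrite /Lrel zLy.
Qed.

End Green2.


Section Star.
Variables (S : finType) (op : S -> S -> S) (st : S -> S).
Hypothesis opA : forall x y z, op (op x y) z = op x (op y z).
Hypothesis stK : forall x, st (st x) = x.
Hypothesis stM : forall x y, st (op x y) = op (st y) (st x).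

Definition ost (a : option S) := omap st a.
Lemma ostM a b : ost (om op a b) = om op (ost b) (ost a).
Proof. by case: a => [a|]; case: b => [b|] //=; rewrite stM. Qed.

Lemma st_leL x y : leLg op x y -> leR op (st x) (st y).
Proof.
move=> /leLP[s H]; apply/leRP; exists (ost s).
by rewrite -[Some (st x)]/(ost (Some x)) H ostM.
Qed.
Lemma st_leR x y : leR op x y -> leLg op (st x) (st y).
Proof.
move=> /leRP[s H]; apply/leLP; exists (ost s).
by rewrite -[Some (st x)]/(ost (Some x)) H ostM.
Qed.
Lemma st_leJ x y : leJ op x y -> leJ op (st x) (st y).
Proof.
move=> /leJP[s [t H]]; apply/leJP; exists (ost t), (ost s).
by rewrite -[Some (st x)]/(ost (Some x)) H !ostM omA.
Qed.
Lemma st_Lrel x y : Lrel op x y -> Rrel op (st x) (st y).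
Proof. by case/andP=> h1 h2; rewrite /Rrel !st_leL. Qed.
Lemma st_Rrel x y : Rrel op x y -> Lrel op (st x) (st y).
Proof. by case/andP=> h1 h2; rewrite /Lrel !st_leR. Qed.
Lemma st_LrelE x y : Lrel op (st x) (st y) = Rrel op x y.
Proof.
apply/idP/idP; last exact: st_Rrel.
by move/st_Lrel; rewrite !stK.
Qed.
Lemma st_RrelE x y : Rrel op (st x) (st y) = Lrel op x y.
Proof.
apply/idP/idP; last exact: st_Lrel.
by move/st_Rrel; rewrite !stK.
Qed.
Lemma st_Drel x y : Drel op x y -> Drel op (st x) (st y).
Proof.
apply: (connect_ind2 (P := fun x y => Drel op (st x) (st y))).
  by move=> z; apply: Drel_refl.
move=> a b c /orP[h|h] h2; apply: Drel_trans h2.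
  by apply: LD; apply: st_Rrel.
by apply: RD; apply: st_Lrel.
Qed.

Lemma dclP (D : dcl op) : exists x, val D = [set y | Drel op x y].
Proof. by case: D => /= D /imsetP[x _ ->]; exists x. Qed.

Lemma dcl_memE (D : dcl op) z w : w \in val D -> (z \in val D) = Drel op w z.
Proof.
have [x ->] := dclP D; rewrite !inE => Hw.
apply/idP/idP => H; first by apply: Drel_trans H; rewrite Drel_sym.
exact: Drel_trans Hw H.
Qed.

Lemma dcl_eq (D1 D2 : dcl op) z : z \in val D1 -> z \in val D2 -> D1 = D2.
Proof.
move=> h1 h2; apply: val_inj; apply/setP => w.
by rewrite (dcl_memE w h1) (dcl_memE w h2).
Qed.

Definition dcl_of (z : S) : dcl op :=
  exist (fun D => D \in dclasses op) [set y | Drel op z y] (imset_f _ (isT : z \in S)).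

Lemma mem_dcl_of z : z \in val (dcl_of z).
Proof. by rewrite inE Drel_refl. Qed.

Lemma dle_antisym (D1 D2 : dcl op) : dle op (val D1) (val D2) -> dle op (val D2) (val D1) -> D1 = D2.
Proof.
case/existsP=> x1 /andP[x1D1 /existsP[y2 /andP[y2D2 h1]]].
case/existsP=> x2 /andP[x2D2 /existsP[y1 /andP[y1D1 h2]]].
have /andP[j1 j2] : leJ op x2 y2 && leJ op y2 x2 by apply: (DJ opA); rewrite -(dcl_memE y2 x2D2).
have /andP[j3 j4] : leJ op y1 x1 && leJ op x1 y1 by apply: (DJ opA); rewrite -(dcl_memE x1 y1D1).
have hyx : leJ op y2 x1.
  apply: (leJ_trans opA j2); apply: (leJ_trans opA h2); exact j3.
have := JD opA h1 hyx; rewrite -(dcl_memE y2 x1D1) => y2D1.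
exact: dcl_eq y2D1 y2D2.
Qed.

Lemma dlt_asym (D1 D2 : dcl op) : dlt op (val D1) (val D2) -> dlt op (val D2) (val D1) -> False.
Proof.
case/andP=> h1 n1 /andP[h2 _]; move: n1.
by rewrite (dle_antisym h1 h2) eqxx.
Qed.

Lemma dle_trans (D1 D2 D3 : dcl op) : dle op (val D1) (val D2) -> dle op (val D2) (val D3) -> dle op (val D1) (val D3).
Proof.
case/existsP=> x1 /andP[x1D1 /existsP[y2 /andP[y2D2 h1]]].
case/existsP=> x2 /andP[x2D2 /existsP[y3 /andP[y3D3 h2]]].
have /andP[j1 j2] : leJ op x2 y2 && leJ op y2 x2 by apply: (DJ opA); rewrite -(dcl_memE y2 x2D2).
apply/existsP; exists x1; rewrite x1D1; apply/existsP; exists y3; rewrite y3D3 /=.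
apply: (leJ_trans opA h1); apply: (leJ_trans opA j2); exact h2.
Qed.

Lemma dlt_trans (D1 D2 D3 : dcl op) : dlt op (val D1) (val D2) -> dlt op (val D2) (val D3) -> dlt op (val D1) (val D3).
Proof.
case/andP=> h1 n1 /andP[h2 n2]; rewrite /dlt (dle_trans h1 h2) /=.
apply/negP => /eqP e13; have e : D1 = D3 by apply: val_inj.
subst D3; move: n1; rewrite (dle_antisym h1 h2) eqxx //.
Qed.

Lemma lclP (D : {set S}) (L : lcl op D) : exists2 x, x \in D & val L = [set y | Lrel op x y].
Proof. by case: L => /= L /imsetP[x xD ->]; exists x. Qed.

Lemma lcl_memE D (L : lcl op D) z w : w \in val L -> (z \in val L) = Lrel op w z.
Proof.
have [x _ ->] := lclP L; rewrite !inE => Hw.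
apply/idP/idP => H; first by apply: (Lrel_trans opA _ H); rewrite Lrel_sym.
exact: (Lrel_trans opA Hw H).
Qed.

Lemma lcl_eq D (L1 L2 : lcl op D) z : z \in val L1 -> z \in val L2 -> L1 = L2.
Proof.
move=> h1 h2; apply: val_inj; apply/setP => w.
by rewrite (lcl_memE w h1) (lcl_memE w h2).
Qed.

Definition lcl_of (D : {set S}) z (h : z \in D) : lcl op D :=
  exist (fun L => L \in lclasses_in op D) [set y | Lrel op z y] (imset_f _ h).

Lemma mem_lcl_of (D : {set S}) z (h : z \in D) : z \in val (lcl_of h).
Proof. by rewrite inE Lrel_refl. Qed.

End Star.


Section Egg.
Variables (S : finType) (op : S -> S -> S) (e : S).
Hypothesis opA : forall x y z, op (op x y) z = op x (op y z).
Hypothesis ee : op e e = e.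
Local Notation "x ** y" := (om op x y) (at level 40, left associativity).
Local Notation omA := (omA opA).

Lemma omS x y : Some x ** Some y = Some (op x y).
Proof. by []. Qed.

Lemma eL x : leLg op x e -> op x e = x.
Proof.
move=> /leLP[s H]; apply: Some_inj.
by rewrite -[Some (op x e)]/(Some x ** Some e) H -omA /= ee.
Qed.
Lemma eR x : leR op x e -> op e x = x.
Proof.
move=> /leRP[s H]; apply: Some_inj.
by rewrite -[Some (op e x)]/(Some e ** Some x) H omA /= ee.
Qed.

Lemma hcl g : g \in hclass op e ->
  [/\ op g e = g, op e g = g, Rrel op g e & Lrel op g e].
Proof.
rewrite inE => /andP[gR gL]; rewrite Rrel_sym in gR; rewrite Lrel_sym in gL.
by split => //; [apply: eL; case/andP: gL| apply: eR; case/andP: gR].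
Qed.

Lemma hinv g : g \in hclass op e -> exists g', op g' g = e /\ op g g' = e.
Proof.
move=> gH; have [ge eg gR gL] := hcl gH.
case/andP: gR => _ /leRP[a0 Ha0]; case/andP: gL => _ /leLP[b0 Hb0].
have [g' Hg'] : exists g', Some g' = Some e ** a0 by case: a0 {Ha0} => [a0|]; [exists (op e a0)|exists e].
have Hg2 : Some g' = b0 ** Some e by rewrite Hg' {1}Hb0 -omA -Ha0.
exists g'; split; apply: Some_inj.
  by rewrite -[Some (op g' g)]/(Some g' ** Some g) Hg2 -omA /= eg -Hb0.
by rewrite -[Some (op g g')]/(Some g ** Some g') Hg' omA omS ge -Ha0.
Qed.

Lemma dec a b z : Lrel op a e -> Rrel op b e -> Rrel op z a -> Lrel op z b ->
  exists2 g, g \in hclass op e & z = op (op a g) b.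
Proof.
case/andP=> aLe /leLP[d Hd]; case/andP=> bRe /leRP[c Hc].
case/andP=> /leRP[a1 Ha1] /leRP[a2 Ha2]; case/andP=> /leLP[b1 Hb1] /leLP[b2 Hb2].
have ae := eL aLe; have eb := eR bRe.
have [g Hg] : exists g, Some g = d ** (Some z ** c).
  by case: c {Hc} => [c|]; case: d {Hd} => [d|] /=; eexists; reflexivity.
have F1 : Some a ** (d ** Some z) = Some z.
  by rewrite {1}Ha1 (omA d) -Hd omA omS ae -Ha1.
have F2 : (Some z ** c) ** Some b = Some z.
  by rewrite {1}Hb1 -(omA b1) -Hc -omA omS eb -Hb1.
exists g; last first.
  apply: Some_inj; rewrite -[Some (op (op a g) b)]/((Some a ** Some g) ** Some b) Hg.
  by rewrite (omA d) omA F1 F2.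
have F1x x : Some a ** (d ** (Some z ** x)) = Some z ** x by rewrite (omA d) omA F1.
have F2x x : Some z ** (c ** (Some b ** x)) = Some z ** x by rewrite omA omA F2.
rewrite inE /Hrel /Rrel /Lrel; apply/andP; split; apply/andP; split.
- by apply/leRP; exists (Some b ** a2); rewrite Hd Ha2 Hg -!omA F2x.
- by apply/leRP; exists (Some g); rewrite Hg Hd -!omA F1x.
- by apply/leLP; exists (b2 ** Some a); rewrite Hc Hb2 Hg -!omA F1x.
- by apply/leLP; exists (Some g); rewrite Hg Hc -!omA F2x.
Qed.
Lemma lu1 a b g : Lrel op a e -> Rrel op b e -> g \in hclass op e ->
  Lrel op (op (op a g) b) b.
Proof.
case/andP=> aLe /leLP[d Hd]; case/andP=> bRe /leRP[c Hc] gH.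
have [ge eg _ _] := hcl gH; have [g' [g'g gg']] := hinv gH.
have eb := eR bRe.
apply/andP; split; first by apply/leLP; exists (Some (op a g)).
apply/leLP; exists (Some g' ** d).
have HdX x : d ** (Some a ** x) = Some e ** x by rewrite omA -Hd.
have HegX x : Some e ** (Some g ** x) = Some g ** x by rewrite omA omS eg.
rewrite -[Some (op (op a g) b)]/((Some a ** Some g) ** Some b) -!omA HdX HegX.
by rewrite omA omS g'g omS eb.
Qed.

Lemma lu2 a b g : Lrel op a e -> Rrel op b e -> g \in hclass op e ->
  Rrel op (op (op a g) b) a.
Proof.
case/andP=> aLe /leLP[d Hd]; case/andP=> bRe /leRP[c Hc] gH.
have [ge eg _ _] := hcl gH; have [g' [g'g gg']] := hinv gH.
have ae := eL aLe.
apply/andP; split; first by apply/leRP; exists (Some (op g b)); rewrite omS opA.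
apply/leRP; exists (c ** Some g').
have HcX x : Some b ** (c ** x) = Some e ** x by rewrite omA -Hc.
have HgeX x : Some g ** (Some e ** x) = Some g ** x by rewrite omA omS ge.
rewrite -[Some (op (op a g) b)]/((Some a ** Some g) ** Some b) -!omA HcX HgeX.
by rewrite omS gg' omS ae.
Qed.

Lemma lu3 a b g1 g2 : Lrel op a e -> Rrel op b e -> g1 \in hclass op e ->
  g2 \in hclass op e -> op (op a g1) b = op (op a g2) b -> g1 = g2.
Proof.
case/andP=> aLe /leLP[d Hd]; case/andP=> bRe /leRP[c Hc] g1H g2H E.
have HdX x : d ** (Some a ** x) = Some e ** x by rewrite omA -Hd.
suff K g : g \in hclass op e -> d ** (Some (op (op a g) b) ** c) = Some g.
  by apply: Some_inj; rewrite -(K _ g1H) -(K _ g2H) E.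
move=> gH; have [ge eg _ _] := hcl gH.
have HegX x : Some e ** (Some g ** x) = Some g ** x by rewrite omA omS eg.
rewrite -[Some (op (op a g) b)]/((Some a ** Some g) ** Some b) -!omA HdX HegX.
by rewrite -Hc omS ge.
Qed.

Lemma lu4 a g : Lrel op a e -> g \in hclass op e -> Lrel op (op a g) e.
Proof.
case/andP=> aLe /leLP[d Hd] gH.
have [ge eg _ /andP[gLe _]] := hcl gH; have [g' [g'g gg']] := hinv gH.
apply/andP; split.
  by apply: (leL_trans opA _ gLe); apply/leLP; exists (Some a).
apply/leLP; exists (Some g' ** d).
have HdX x : d ** (Some a ** x) = Some e ** x by rewrite omA -Hd.
by rewrite -omA -omS HdX omS eg omS g'g.
Qed.
End Egg.


Section Struct.
Variables (S : finType) (op : S -> S -> S) (st : S -> S).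
Unset Implicit Arguments.
Variables (one : dcl op -> S) (u : forall D : dcl op, lcl op (val D) -> S).
Set Implicit Arguments.
Hypothesis opA : forall x y z, op (op x y) z = op x (op y z).
Hypothesis stK : forall x, st (st x) = x.
Hypothesis stM : forall x y, st (op x y) = op (st y) (st x).
Hypothesis hone : forall D, [/\ one D \in val D, op (one D) (one D) = one D & st (one D) = one D].
Hypothesis hu : forall D (L : lcl op (val D)), u D L \in val L /\ Rrel op (u D L) (one D).

Definition aL (D : dcl op) (L : lcl op (val D)) := st (u D L).

Lemma one_in (D : dcl op) : one D \in val D. Proof. by case: (hone D). Qed.
Lemma one_idem (D : dcl op) : op (one D) (one D) = one D. Proof. by case: (hone D). Qed.
Lemma one_st (D : dcl op) : st (one D) = one D. Proof. by case: (hone D). Qed.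

Lemma inD_Drel (D : dcl op) z : (z \in val D) = Drel op (one D) z.
Proof. exact: dcl_memE (one_in D). Qed.

Lemma uR (D : dcl op) (L : lcl op (val D)) : Rrel op (u D L) (one D). Proof. by case: (hu L). Qed.
Lemma u_inL (D : dcl op) (L : lcl op (val D)) : u D L \in val L. Proof. by case: (hu L). Qed.
Lemma aL_L (D : dcl op) (L : lcl op (val D)) : Lrel op (aL L) (one D).
Proof. by rewrite /aL -(one_st D) st_LrelE // uR. Qed.
Lemma u_inD (D : dcl op) (L : lcl op (val D)) : u D L \in val D.
Proof. by rewrite inD_Drel; apply: RD; rewrite Rrel_sym uR. Qed.
Lemma aL_inD (D : dcl op) (L : lcl op (val D)) : aL L \in val D.
Proof. by rewrite inD_Drel; apply: LD; rewrite Lrel_sym aL_L. Qed.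
Lemma st_inD (D : dcl op) z : z \in val D -> st z \in val D.
Proof. by rewrite !inD_Drel -{2}(one_st D); apply: (st_Drel stM). Qed.

Lemma inL (D : dcl op) (L : lcl op (val D)) z : (z \in val L) = Lrel op (u D L) z.
Proof. exact: (lcl_memE opA _ (u_inL L)). Qed.

Let hD (D : dcl op) := hclass op (one D).

Lemma block_props (D : dcl op) (L K : lcl op (val D)) g : g \in hD D ->
  let z := op (op (aL L) g) (u D K) in
  [/\ z \in val D, z \in val K & st z \in val L].
Proof.
move=> gH z.
have zR : Rrel op z (aL L) := lu2 opA (one_idem D) (aL_L L) (uR K) gH.
have zL : Lrel op z (u D K) := lu1 opA (one_idem D) (aL_L L) (uR K) gH.
split.
- by rewrite inD_Drel; apply: (Drel_trans (y := aL L)); [rewrite -inD_Drel aL_inD| apply: RD; rewrite Rrel_sym].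
- by rewrite inL Lrel_sym.
- by rewrite inL Lrel_sym -(stK (u D L)); exact: (st_Rrel stM zR).
Qed.

Lemma block_D (D D' : dcl op) (L K : lcl op (val D)) (L' K' : lcl op (val D')) g g' :
  g \in hD D -> g' \in hD D' ->
  op (op (aL L) g) (u D K) = op (op (aL L') g') (u D' K') -> D = D'.
Proof.
move=> gH g'H E; have [z1 _ _] := block_props L K gH; have [z2 _ _] := block_props L' K' g'H.
by rewrite E in z1; apply: dcl_eq z1 z2.
Qed.

Lemma block_uniq (D : dcl op) (L K L' K' : lcl op (val D)) g g' :
  g \in hD D -> g' \in hD D ->
  op (op (aL L) g) (u D K) = op (op (aL L') g') (u D K') -> [/\ L = L', K = K' & g = g'].
Proof.
move=> gH g'H E; have [_ k1 l1] := block_props L K gH; have [_ k2 l2] := block_props L' K' g'H.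
rewrite E in k1 l1.
have eL := lcl_eq opA l1 l2; have eK := lcl_eq opA k1 k2; subst L' K'; split => //.
exact: (lu3 opA (one_idem D) (aL_L L) (uR K) gH g'H E).
Qed.

Lemma decomp z : exists D : dcl op, exists L K : lcl op (val D), exists2 g, g \in hD D &
  z = op (op (aL L) g) (u D K).
Proof.
set D := dcl_of op z; have zD : z \in val D by apply: mem_dcl_of.
have szD := st_inD zD.
exists D, (lcl_of op szD), (lcl_of op zD).
apply: (dec opA (one_idem D) (aL_L _) (uR _)).
- rewrite -(st_LrelE stK stM) /aL stK Lrel_sym -inL; exact: mem_lcl_of.
- rewrite Lrel_sym -inL; exact: mem_lcl_of.
Qed.

Lemma wdec (D : dcl op) w : Lrel op w (one D) ->
  exists L : lcl op (val D), exists2 h, h \in hD D & w = op (aL L) h.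
Proof.
move=> wL.
have wD : w \in val D by rewrite inD_Drel; apply: LD; rewrite Lrel_sym.
have swD := st_inD wD.
pose L' := lcl_of op swD.
have wR : Rrel op w (aL L').
  rewrite -(st_LrelE stK stM) /aL stK Lrel_sym -inL; exact: mem_lcl_of.
clearbody L'; exists L'.
have [h hH E] := dec opA (one_idem D) (aL_L L') (Rrel_refl op (one D)) wR wL.
have [he _ _ _] := hcl opA (one_idem D) hH.
by exists h => //; rewrite E opA he.
Qed.

Lemma stay (D : dcl op) (L : lcl op (val D)) x y :
  ~~ Lrel op (op x (aL L)) (one D) ->
  let z := op (op x (aL L)) y in z \notin val D /\ dle op (val (dcl_of op z)) (val D).
Proof.
move=> nL z; split.
  apply/negP; rewrite inD_Drel => /(DJ opA)/andP[j1 _].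
  move/negP: nL; apply; apply/andP; split.
    apply: (leL_trans opA (y := aL L)); first by apply/leLP; exists (Some x).
    by case/andP: (aL_L L).
  apply: (stabL opA); first by apply: (leL_trans opA (y := aL L)); [apply/leLP; exists (Some x)| case/andP: (aL_L L)].
  by apply: (leJ_trans opA j1); apply: leRJ; apply/leRP; exists (Some y).
apply/existsP; exists z; rewrite mem_dcl_of; apply/existsP; exists (aL L).
rewrite aL_inD /=; apply/leJP; exists (Some x), (Some y); done.
Qed.

End Struct.

Local Open Scope ring_scope.

Section Twist.
Variables (R : comPzRingType) (S : finType) (op : S -> S -> S) (alpha : S -> S -> R)
  (st : S -> S).
Hypothesis opA : forall x y z, op (op x y) z = op x (op y z).
Hypothesis alphaC : forall x y z, alpha x y * alpha (op x y) z = alpha x (op y z) * alpha y z.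
Hypothesis stK : forall x, st (st x) = x.
Hypothesis stM : forall x y, st (op x y) = op (st y) (st x).
Hypothesis alphaS : forall x y, alpha x y = alpha (st y) (st x).

Notation V := {ffun S -> R^o}.
Notation td := (@tdelta R S).
Notation mul := (tmul op alpha).
Notation star := (@tstar R S st).

Lemma scaleo (k x : R) : k *: (x : R^o) = k * x.
Proof. by []. Qed.

Lemma tdE x z : td x z = (z == x)%:R.
Proof. by rewrite ffunE. Qed.

Lemma fexpand (f : V) : f = \sum_x f x *: td x.
Proof.
apply/ffunP=> z; rewrite sum_ffunE (bigD1 z) //= big1 => [|y yz].
  by rewrite !ffunE eqxx scaleo mulr1 addr0.
by rewrite !ffunE eq_sym (negbTE yz) scaleo mulr0.
Qed.

Lemma tmulE (f g : V) :
  mul f g = \sum_x \sum_y (f x * g y * alpha x y) *: td (op x y).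
Proof.
apply/ffunP=> z; rewrite ffunE sum_ffunE; apply: eq_bigr => x _.
rewrite sum_ffunE; apply: eq_bigr => y _.
by rewrite !ffunE eq_sym scaleo; case: eqP; rewrite ?mulr1 ?mulr0.
Qed.

Lemma tmulDl (f g h : V) : mul (f + g) h = mul f h + mul g h.
Proof.
rewrite !tmulE -big_split; apply: eq_bigr => x _; rewrite -big_split.
by apply: eq_bigr => y _; rewrite !ffunE !mulrDl scalerDl.
Qed.
Lemma tmulDr (f g h : V) : mul h (f + g) = mul h f + mul h g.
Proof.
rewrite !tmulE -big_split; apply: eq_bigr => x _; rewrite -big_split.
by apply: eq_bigr => y _; rewrite !ffunE !mulrDr !mulrDl scalerDl.
Qed.
Lemma tmulZl k (f g : V) : mul (k *: f) g = k *: mul f g.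
Proof.
rewrite !tmulE scaler_sumr; apply: eq_bigr => x _; rewrite scaler_sumr.
by apply: eq_bigr => y _; rewrite !ffunE scalerA !mulrA.
Qed.
Lemma tmulZr k (f g : V) : mul g (k *: f) = k *: mul g f.
Proof.
rewrite !tmulE scaler_sumr; apply: eq_bigr => x _; rewrite scaler_sumr.
by apply: eq_bigr => y _; rewrite !ffunE scalerA mulrCA !mulrA.
Qed.
Lemma tmul0l (g : V) : mul 0 g = 0.
Proof. by rewrite tmulE big1 // => x _; rewrite big1 // => y _; rewrite ffunE !mul0r scale0r. Qed.
Lemma tmul0r (g : V) : mul g 0 = 0.
Proof. by rewrite tmulE big1 // => x _; rewrite big1 // => y _; rewrite ffunE mulr0 mul0r scale0r. Qed.
Lemma tmul_suml I (r : seq I) (P : pred I) (F : I -> V) g :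
  mul (\sum_(i <- r | P i) F i) g = \sum_(i <- r | P i) mul (F i) g.
Proof.
elim/big_rec2: _ => [|i a b _ <-]; [exact: tmul0l|exact: tmulDl].
Qed.
Lemma tmul_sumr I (r : seq I) (P : pred I) (F : I -> V) g :
  mul g (\sum_(i <- r | P i) F i) = \sum_(i <- r | P i) mul g (F i).
Proof.
elim/big_rec2: _ => [|i a b _ <-]; [exact: tmul0r|exact: tmulDr].
Qed.

Lemma tmul_td x y : mul (td x) (td y) = alpha x y *: td (op x y).
Proof.
rewrite tmulE (bigD1 x) //= [X in _ + X]big1 => [|x' x'x]; last first.
  by rewrite big1 // => y' _; rewrite !tdE (negbTE x'x) !mul0r scale0r.
rewrite addr0 (bigD1 y) //= [X in _ + X]big1 => [|y' y'y].
  by rewrite !tdE !eqxx addr0 !mul1r.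
by rewrite !tdE (negbTE y'y) mulr0 mul0r scale0r.
Qed.

Lemma tmulA (f g h : V) : mul (mul f g) h = mul f (mul g h).
Proof.
rewrite [f]fexpand [g]fexpand [h]fexpand.
rewrite !tmul_suml; apply: eq_bigr => x _.
rewrite [mul _ (\sum_x0 g x0 *: td x0)]tmul_sumr tmul_suml tmul_sumr.
apply: eq_bigr => y _.
rewrite !tmul_sumr; apply: eq_bigr => z _.
rewrite !tmulZl !tmulZr !tmul_td !tmulZl !tmulZr !tmul_td.
rewrite !scalerA opA; congr (_ *: _); rewrite -!mulrA alphaC (mulrC (alpha x _)) !mulrA; congr (_ * _ * _); rewrite -!mulrA; congr (_ * _); exact: mulrC.
Qed.

Lemma tstarE (f : V) : star f = \sum_x f x *: td (st x).
Proof. by []. Qed.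
Lemma tstar_td x : star (td x) = td (st x).
Proof.
rewrite tstarE (bigD1 x) //= big1 => [|y yx]; first by rewrite tdE eqxx scale1r addr0.
by rewrite tdE (negbTE yx) scale0r.
Qed.
Lemma tstarD (f g : V) : star (f + g) = star f + star g.
Proof. by rewrite !tstarE -big_split; apply: eq_bigr => x _; rewrite ffunE scalerDl. Qed.
Lemma tstarZ k (f : V) : star (k *: f) = k *: star f.
Proof. by rewrite !tstarE scaler_sumr; apply: eq_bigr => x _; rewrite ffunE scalerA. Qed.
Lemma tstar0 : star 0 = 0.
Proof. by rewrite tstarE big1 // => x _; rewrite ffunE scale0r. Qed.
Lemma tstar_sum I (r : seq I) (P : pred I) (F : I -> V) :
  star (\sum_(i <- r | P i) F i) = \sum_(i <- r | P i) star (F i).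
Proof. elim/big_rec2: _ => [|i a b _ <-]; [exact: tstar0|exact: tstarD]. Qed.
Lemma tstarK (f : V) : star (star f) = f.
Proof.
rewrite {2}(fexpand f) [star f]tstarE tstar_sum; apply: eq_bigr => x _.
by rewrite tstarZ tstar_td stK.
Qed.
Lemma tstarM (f g : V) : star (mul f g) = mul (star g) (star f).
Proof.
rewrite [f]fexpand [g]fexpand tmul_suml !tstar_sum tmul_sumr.
apply: eq_bigr => x _.
rewrite tmul_sumr tstar_sum tmul_suml; apply: eq_bigr => y _.
rewrite tmulZl tmulZr tstarZ tstarZ tmul_td tstarZ tstar_td !tstarZ tmulZl tmulZr !tstar_td tmul_td.
by rewrite stM alphaS !scalerA [g y * _]mulrC.
Qed.
End Twist.

Local Open Scope ring_scope.

Section Main.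
Unset Implicit Arguments.
Variables (R : comPzRingType) (S : finType) (op : S -> S -> S)
  (st : S -> S) (alpha : S -> S -> R)
  (Lam : dcl op -> finType) (leL : forall D, Lam D -> Lam D -> Prop)
  (M : forall D, Lam D -> finType)
  (C : forall D (l : Lam D), M D l -> M D l -> {ffun S -> R^o})
  (one : dcl op -> S) (u : forall D : dcl op, lcl op (val D) -> S).
Set Implicit Arguments.
Hypothesis opA : forall x y z, op (op x y) z = op x (op y z).
Hypothesis stK : forall x, st (st x) = x.
Hypothesis stM : forall x y, st (op x y) = op (st y) (st x).
Hypothesis alphaC : forall x y z, alpha x y * alpha (op x y) z = alpha x (op y z) * alpha y z.
Hypothesis alphaS : forall x y, alpha x y = alpha (st y) (st x).
Hypothesis hone : forall D, [/\ one D \in val D, op (one D) (one D) = one D & st (one D) = one D].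
Hypothesis hunit : forall D x y, Lrel op x (one D) -> Rrel op y (one D) ->
     exists r, alpha x y * r = 1.
Hypothesis hcell : forall D, cellular
     (fun f : {ffun S -> R^o} => forall z, z \notin hclass op (one D) -> f z = 0)
     (tmul op alpha) (tstar st) (leL D) (C D).
Hypothesis hu : forall D (L : lcl op (val D)), u D L \in val L /\ Rrel op (u D L) (one D).

Notation V := {ffun S -> R^o}.
Notation mul := (tmul op alpha).
Notation star := (@tstar R S st).
Notation td := (@tdelta R S).
Definition AD (D : dcl op) (f : V) := forall z, z \notin hclass op (one D) -> f z = 0.
Notation aL := (fun (D : dcl op) (L : lcl op (val D)) => st (u D L)).

Notation bigI := {D : dcl op & Lam D}.
Notation bC := (bigC alpha st C u).
Notation bCp p := (@bigC R S op alpha st Lam M C u p).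
Notation bM := (bigM M).

Lemma cC_in D l s t : AD D (C D l s t).
Proof. by case: (hcell D) => [[_ h _ _] _ _]; apply: h. Qed.
Lemma cC_span D v : AD D v -> exists c, v = lincomb (C D) c.
Proof. by case: (hcell D) => [[_ _ h _] _ _]; apply: h. Qed.
Lemma cC_ind D c1 c2 : lincomb (C D) c1 = lincomb (C D) c2 -> forall l s t, c1 l s t = c2 l s t.
Proof. by case: (hcell D) => [[_ _ _ h] _ _]; apply: h. Qed.
Lemma cC_star D l s t : star (C D l s t) = C D l t s.
Proof. by case: (hcell D) => [_ [_ _ _ _ h] _]; apply: h. Qed.
Lemma cC_C3 D (l : Lam D) (s : M D l) a : AD D a ->
  exists r : M D l -> R, forall t : M D l,
    exists c : forall m, M D m -> M D m -> R,
      (forall m s'' t'', ~ (leL D m l /\ m <> l) -> c m s'' t'' = 0) /\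
      mul a (C D l s t) - \sum_(s' : M D l) r s' *: C D l s' t = lincomb (C D) c.
Proof. by case: (hcell D) => [_ _ h]; apply: h. Qed.
Lemma cC_po D : [/\ (forall l, leL D l l),
              (forall l m, leL D l m -> leL D m l -> l = m) &
              (forall l m n, leL D l m -> leL D m n -> leL D l n)].
Proof. by case: (hcell D) => [[h _ _ _] _ _]. Qed.

Definition Phi (D : dcl op) (L K : lcl op (val D)) (f : V) : V :=
  mul (mul (td (aL D L)) f) (td (u D K)).

Lemma bCE (p : bigI) (x y : bM p) : bCp p x y = Phi x.1 y.1 (C (tag p) (tagged p) x.2 y.2).
Proof. by []. Qed.

Lemma PhiD D L K f g : Phi L K (f + g) = Phi (D:=D) L K f + Phi L K g.
Proof. by rewrite /Phi tmulDr tmulDl. Qed.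
Lemma PhiZ D L K k f : Phi L K (k *: f) = k *: Phi (D:=D) L K f.
Proof. by rewrite /Phi tmulZr tmulZl. Qed.
Lemma Phi0 D L K : Phi (D:=D) L K 0 = 0.
Proof. by rewrite /Phi tmul0r tmul0l. Qed.
Lemma Phi_sum D L K I (r : seq I) (P : pred I) (F : I -> V) :
  Phi (D:=D) L K (\sum_(i <- r | P i) F i) = \sum_(i <- r | P i) Phi L K (F i).
Proof. by elim/big_rec2: _ => [|i a b _ <-]; [exact: Phi0|exact: PhiD]. Qed.

Definition kap (D : dcl op) (L K : lcl op (val D)) g :=
  alpha (aL D L) g * alpha (op (aL D L) g) (u D K).
Definition blk (D : dcl op) (L K : lcl op (val D)) g := op (op (aL D L) g) (u D K).

Lemma Phi_td D L K g : Phi (D:=D) L K (td g) = kap L K g *: td (blk L K g).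
Proof. by rewrite /Phi tmul_td tmulZl tmul_td scalerA. Qed.


Definition spn (P : bigI -> Prop) (v : V) :=
  exists c : forall m : bigI, bM m -> bM m -> R,
    (forall m x y, ~ P m -> c m x y = 0) /\ v = lincomb bC c.

Lemma spn0 P : spn P 0.
Proof.
exists (fun _ _ _ => 0); split => //; rewrite /lincomb big1 // => m _.
by rewrite big1 // => x _; rewrite big1 // => y _; rewrite scale0r.
Qed.

Lemma spnD P v w : spn P v -> spn P w -> spn P (v + w).
Proof.
move=> [c [hc ->]] [d [hd ->]]; exists (fun m x y => c m x y + d m x y); split.
  by move=> m x y nP; rewrite hc // hd // addr0.
rewrite /lincomb -big_split; apply: eq_bigr => m _.
rewrite -big_split; apply: eq_bigr => x _; rewrite -big_split; apply: eq_bigr => y _.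
by rewrite scalerDl.
Qed.

Lemma spnZ P k v : spn P v -> spn P (k *: v).
Proof.
move=> [c [hc ->]]; exists (fun m x y => k * c m x y); split.
  by move=> m x y nP; rewrite hc // mulr0.
rewrite /lincomb scaler_sumr; apply: eq_bigr => m _.
rewrite scaler_sumr; apply: eq_bigr => x _; rewrite scaler_sumr; apply: eq_bigr => y _.
by rewrite scalerA.
Qed.

Lemma spnB P v w : spn P v -> spn P w -> spn P (v - w).
Proof. by move=> h1 h2; rewrite -scaleN1r; apply: spnD => //; apply: spnZ. Qed.

Lemma spn_sum P I (r : seq I) (Q : pred I) (F : I -> V) :
  (forall i, Q i -> spn P (F i)) -> spn P (\sum_(i <- r | Q i) F i).
Proof.
move=> H; elim/big_rec: _ => [|i v Qi hv]; first exact: spn0.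
by apply: spnD => //; apply: H.
Qed.

Lemma spnW (P Q : bigI -> Prop) v : (forall m, P m -> Q m) -> spn P v -> spn Q v.
Proof.
move=> PQ [c [hc ->]]; exists c; split => // m x y nQ; apply: hc => /PQ; done.
Qed.

Lemma spnC P (p : bigI) (x y : bM p) : P p -> spn P (bCp p x y).
Proof.
move=> Pp.
pose T := {m : bigI & (bM m * bM m)%type}.
pose c := fun (m : bigI) (x' y' : bM m) =>
  ((Tagged (fun m => (bM m * bM m)%type) (x', y') : T) == Tagged _ (x, y))%:R : R.
exists c; split.
  move=> m x' y' nP; rewrite /c; case: eqP => // E; case: nP.
  by have -> : m = p by apply: (f_equal (@tag _ _) E).
rewrite /lincomb (bigD1 p) //= [X in _ + X]big1 => [|m mp]; last first.
  rewrite big1 // => x' _; rewrite big1 // => y' _; rewrite /c; case: eqP => [E|_]; last by rewrite scale0r.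
  by move/eqP: mp; case; apply: (f_equal (@tag _ _) E).
rewrite addr0 (bigD1 x) //= [X in _ + X]big1 => [|x' x'x]; last first.
  rewrite big1 // => y' _; rewrite /c; case: eqP => [E|_]; last by rewrite scale0r.
  by have Ex := f_equal fst (eq_from_Tagged E); simpl in Ex; rewrite Ex eqxx in x'x.
rewrite addr0 (bigD1 y) //= [X in _ + X]big1 => [|y' y'y]; last first.
  rewrite /c; case: eqP => [E|_]; last by rewrite scale0r.
  by have Ey := f_equal snd (eq_from_Tagged E); simpl in Ey; rewrite Ey eqxx in y'y.
by rewrite /c eqxx scale1r addr0.
Qed.


Notation HD D := (hclass op (one D)).
Lemma one_idem' D : op (one D) (one D) = one D. Proof. by case: (hone D). Qed.

Lemma kap_unit D (L K : lcl op (val D)) g : g \in HD D -> exists r, kap L K g * r = 1.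
Proof.
move=> gH; have [_ _ gR _] := hcl opA (one_idem' D) gH.
have [r1 h1] := hunit (aL_L stK stM hone hu L) gR.
have [r2 h2] := hunit (lu4 opA (one_idem' D) (aL_L stK stM hone hu L) gH) (uR hu K).
by exists (r1 * r2); rewrite /kap mulrACA h1 h2 mulr1.
Qed.

Lemma AD_td D g : g \in HD D -> AD D (td g).
Proof. by move=> gH z zH; rewrite tdE; case: eqP => // E; rewrite E gH in zH. Qed.

Lemma Lspan P (D : dcl op) z : z \in val D -> (forall l : Lam D, P (Tagged Lam l)) ->
  spn P (td z).
Proof.
move=> zD HP.
have [D' [L [K [g gH E]]]] := decomp opA stK stM hone hu z.
have [zD' _ _] := block_props opA stK stM hone hu L K gH; rewrite -E in zD'.
have eD := dcl_eq zD' zD; subst D'.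
have [r hr] := kap_unit L K gH.
have -> : td z = r *: Phi L K (td g).
  by rewrite Phi_td scalerA mulrC hr scale1r E.
apply: spnZ.
have [c ->] := cC_span (AD_td gH).
rewrite /lincomb Phi_sum; apply: spn_sum => l _.
rewrite Phi_sum; apply: spn_sum => s _.
rewrite Phi_sum; apply: spn_sum => t _.
rewrite PhiZ; apply: spnZ.
exact: (spnC (p := Tagged Lam l) (L, s) (K, t) (HP l)).
Qed.


Lemma Phi_val D (L K : lcl op (val D)) f z :
  Phi L K f z = \sum_h f h * kap L K h * (z == blk L K h)%:R.
Proof.
rewrite {1}(fexpand f) Phi_sum sum_ffunE; apply: eq_bigr => h _.
by rewrite PhiZ Phi_td scalerA ffunE tdE.
Qed.

Lemma Phi_off D (L K : lcl op (val D)) f z : AD D f -> Phi L K f z != 0 ->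
  exists2 h, h \in HD D & z = blk L K h.
Proof.
move=> Af; rewrite Phi_val => nz.
have /existsP[h nzh] : [exists h, f h * kap L K h * (z == blk L K h)%:R != 0].
  apply: (contraNT _ nz) => /existsPn H; apply/eqP; rewrite big1 // => h _.
  by apply/eqP; move: (H h); rewrite negbK.
exists h.
  by move: nzh; apply: contraTT => hH; rewrite negbK Af // !mul0r.
by move: nzh; case: (z =P blk L K h) => // _; rewrite mulr0 eqxx.
Qed.

Lemma Phi_on D (L K : lcl op (val D)) f g : AD D f -> g \in HD D ->
  Phi L K f (blk L K g) = f g * kap L K g.
Proof.
move=> Af gH; rewrite Phi_val (bigD1 g) //= eqxx mulr1 big1 ?addr0 // => h hg.
case hH: (h \in HD D); last by rewrite Af ?hH // !mul0r.
case: eqP => [E|]; last by rewrite mulr0.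
have [_ _ eg] := block_uniq opA stK stM hone hu gH hH E.
by rewrite eg eqxx in hg.
Qed.

Lemma AD_lincomb D c : AD D (lincomb (C D) c).
Proof.
move=> z zH; rewrite /lincomb sum_ffunE big1 // => l _.
rewrite sum_ffunE big1 // => s _; rewrite sum_ffunE big1 // => t _.
by rewrite ffunE cC_in // scaleo mulr0.
Qed.

Lemma sig_sum (G : forall D : dcl op, Lam D -> V) :
  \sum_(p : bigI) G (tag p) (tagged p) = \sum_(D : dcl op) \sum_(l : Lam D) G D l.
Proof. by rewrite (sig_big_dep xpredT (fun _ => xpredT) G). Qed.

Lemma pair_sum (D : dcl op) (l : Lam D) (H : bM (Tagged Lam l) -> V) :
  \sum_(x : bM (Tagged Lam l)) H x = \sum_(L : lcl op (val D)) \sum_(s : M D l) H (L, s).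
Proof. by rewrite pair_big; apply: eq_bigr => -[]. Qed.

Lemma regroup (c : forall m : bigI, bM m -> bM m -> R) :
  lincomb bC c = \sum_(D : dcl op) \sum_(L : lcl op (val D)) \sum_(K : lcl op (val D))
     Phi L K (lincomb (C D) (fun l s t => c (Tagged Lam l) (L, s) (K, t))).
Proof.
rewrite /lincomb.
pose G := fun D (l : Lam D) =>
   \sum_(x : bM (Tagged Lam l)) \sum_(y : bM (Tagged Lam l))
      c (Tagged Lam l) x y *: bCp (Tagged Lam l) x y.
rewrite (eq_bigr (fun p => G (tag p) (tagged p))); last by case.
rewrite (sig_sum G); apply: eq_bigr => D _.
rewrite /G.
transitivity (\sum_(l : Lam D) \sum_(L : lcl op (val D)) \sum_(s : M D l)
   \sum_(K : lcl op (val D)) \sum_(t : M D l)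
     c (Tagged Lam l) (L, s) (K, t) *: Phi L K (C D l s t)).
  apply: eq_bigr => l _; rewrite pair_sum; apply: eq_bigr => L _; apply: eq_bigr => s _.
  by rewrite pair_sum.
transitivity (\sum_(L : lcl op (val D)) \sum_(K : lcl op (val D)) \sum_(l : Lam D) \sum_(s : M D l)
   \sum_(t : M D l)
     c (Tagged Lam l) (L, s) (K, t) *: Phi L K (C D l s t)); last first.
  apply: eq_bigr => L _; apply: eq_bigr => K _.
  rewrite Phi_sum; apply: eq_bigr => l _; rewrite Phi_sum; apply: eq_bigr => s _.
  by rewrite Phi_sum; apply: eq_bigr => t _; rewrite PhiZ.
rewrite exchange_big; apply: eq_bigr => L _.
under eq_bigr => l _ do rewrite exchange_big.
by rewrite exchange_big.
Qed.

Lemma eval_sum (F : forall D : dcl op, lcl op (val D) -> lcl op (val D) -> V)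
  (HF : forall D L K, AD D (F D L K)) (D0 : dcl op) (L0 K0 : lcl op (val D0)) g :
  g \in HD D0 ->
  (\sum_(D : dcl op) \sum_(L : lcl op (val D)) \sum_(K : lcl op (val D)) Phi L K (F D L K))
    (blk L0 K0 g) = F D0 L0 K0 g * kap L0 K0 g.
Proof.
move=> gH; rewrite sum_ffunE (bigD1 D0) //= [X in _ + X]big1 => [|D DD0]; last first.
  rewrite sum_ffunE big1 // => L _; rewrite sum_ffunE big1 // => K _.
  case: (eqVneq (Phi L K (F D L K) (blk L0 K0 g)) 0) => // nz.
  have [h hH E] := Phi_off (HF D L K) nz.
  have eD := block_D opA stK stM hone hu gH hH E.
  by rewrite eD eqxx in DD0.
rewrite addr0 sum_ffunE (bigD1 L0) //= [X in _ + X]big1 => [|L LL0]; last first.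
  rewrite sum_ffunE big1 // => K _.
  case: (eqVneq (Phi L K (F D0 L K) (blk L0 K0 g)) 0) => // nz.
  have [h hH E] := Phi_off (HF D0 L K) nz.
  have [eL _ _] := block_uniq opA stK stM hone hu gH hH E.
  by rewrite eL eqxx in LL0.
rewrite addr0 sum_ffunE (bigD1 K0) //= [X in _ + X]big1 => [|K KK0]; last first.
  case: (eqVneq (Phi L0 K (F D0 L0 K) (blk L0 K0 g)) 0) => // nz.
  have [h hH E] := Phi_off (HF D0 L0 K) nz.
  have [_ eK _] := block_uniq opA stK stM hone hu gH hH E.
  by rewrite eK eqxx in KK0.
by rewrite addr0 Phi_on.
Qed.

Lemma lincomb0 D : lincomb (C D) (fun _ _ _ => 0) = 0.
Proof.
rewrite /lincomb big1 // => l _; rewrite big1 // => s _; rewrite big1 // => t _.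
by rewrite scale0r.
Qed.

Lemma big_indep (c : forall m : bigI, bM m -> bM m -> R) :
  lincomb bC c = 0 -> forall p x y, c p x y = 0.
Proof.
rewrite regroup => H0.
pose F := fun (D : dcl op) (L K : lcl op (val D)) =>
  lincomb (C D) (fun l s t => c (Tagged Lam l) (L, s) (K, t)).
have HF D L K : AD D (F D L K) by apply: AD_lincomb.
have F0 D L K : F D L K = 0.
  apply/ffunP => g; rewrite ffunE.
  case gH: (g \in HD D); last by rewrite (HF D L K) ?gH.
  have := eval_sum HF L K gH; rewrite H0 ffunE => /esym E.
  have [r hr] := kap_unit L K gH.
  by rewrite -[F D L K g]mulr1 -hr mulrA E mul0r.
move=> p; case: p => D l x y; case: x => L s; case: y => K t.
have := cC_ind (c1 := fun l s t => c (Tagged Lam l) (L, s) (K, t)) (c2 := fun _ _ _ => 0).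
by move=> ->; rewrite // lincomb0 -(F0 D L K).
Qed.

Definition Pl (p : bigI) := fun m : bigI => bigle leL m p /\ m <> p.

Definition Good (p : bigI) (s : bM p) (v : V) :=
  exists r : bM p -> R, forall t : bM p,
    spn (Pl p) (mul v (bCp p s t) - \sum_(s' : bM p) r s' *: bCp p s' t).

Lemma Good0 p s : Good (p:=p) s 0.
Proof.
exists (fun _ => 0) => t; rewrite tmul0l big1 ?subr0 ?sub0r; first exact: spn0.
by move=> s' _; rewrite scale0r.
Qed.

Lemma GoodD p s v w : Good (p:=p) s v -> Good s w -> Good s (v + w).
Proof.
move=> [r1 h1] [r2 h2]; exists (fun s' => r1 s' + r2 s') => t.
have -> : mul (v + w) (bCp p s t) - \sum_s' (r1 s' + r2 s') *: bCp p s' t =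
  (mul v (bCp p s t) - \sum_s' r1 s' *: bCp p s' t) +
  (mul w (bCp p s t) - \sum_s' r2 s' *: bCp p s' t).
  rewrite tmulDl (eq_bigr (fun s' => r1 s' *: bCp p s' t + r2 s' *: bCp p s' t)); last first.
    by move=> s' _; rewrite scalerDl.
  by rewrite big_split /= opprD !addrA; congr (_ + _); rewrite -!addrA; congr (_ + _); rewrite addrC.
exact: spnD.
Qed.

Lemma GoodZ p s k v : Good (p:=p) s v -> Good s (k *: v).
Proof.
move=> [r1 h1]; exists (fun s' => k * r1 s') => t.
have -> : mul (k *: v) (bCp p s t) - \sum_s' (k * r1 s') *: bCp p s' t =
  k *: (mul v (bCp p s t) - \sum_s' r1 s' *: bCp p s' t).
  rewrite tmulZl scalerBr scaler_sumr; congr (_ - _); apply: eq_bigr => s' _.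
  by rewrite scalerA.
exact: spnZ.
Qed.

Lemma Good_sum p s I (r : seq I) (Q : pred I) (F : I -> V) :
  (forall i, Q i -> Good (p:=p) s (F i)) -> Good s (\sum_(i <- r | Q i) F i).
Proof.
move=> H; elim/big_rec: _ => [|i v Qi hv]; first exact: Good0.
by apply: GoodD => //; apply: H.
Qed.

Lemma PhiB D L K f g : Phi L K (f - g) = Phi (D:=D) L K f - Phi L K g.
Proof. by rewrite PhiD -scaleN1r PhiZ scaleN1r. Qed.

Lemma Hmul D (L K : lcl op (val D)) x f :
  mul (td x) (Phi L K f) = alpha x (aL D L) *: mul (mul (td (op x (aL D L))) f) (td (u D K)).
Proof. by rewrite /Phi -(tmulA opA alphaC) -(tmulA opA alphaC) tmul_td !tmulZl. Qed.

Lemma Pl_tag D (m l : Lam D) : leL D m l -> m <> l -> Pl (Tagged Lam l) (Tagged Lam m).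
Proof.
move=> le ne; split; first by right; exists D, m, l.
by move=> E; apply: ne; exact: (eq_from_Tagged E).
Qed.

Lemma spn_low D (l : Lam D) (L K : lcl op (val D)) c :
  (forall m s'' t'', ~ (leL D m l /\ m <> l) -> c m s'' t'' = 0) ->
  spn (Pl (Tagged Lam l)) (Phi L K (lincomb (C D) c)).
Proof.
move=> c0; rewrite /lincomb Phi_sum; apply: spn_sum => m _.
rewrite Phi_sum; apply: spn_sum => s _; rewrite Phi_sum; apply: spn_sum => t _.
rewrite PhiZ; case: (classic (leL D m l /\ m <> l)) => [[Hm1 Hm2]|Hm].
  apply: spnZ; exact: (spnC (p := Tagged Lam m) (L, s) (K, t) (Pl_tag Hm1 Hm2)).
by rewrite c0 // scale0r; apply: spn0.
Qed.

Lemma Good_td (p : bigI) (s : bM p) x : Good s (td x).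
Proof.
move: s; case: p => D l [L s0].
set w := op x (aL D L).
case: (boolP (Lrel op w (one D))) => wL.
  have [L' [h hH Ew]] := wdec opA stK stM hone hu wL.
  have [_ _ hR _] := hcl opA (one_idem' D) hH.
  have [r1 hr1] := hunit (aL_L stK stM hone hu L') hR.
  pose k := alpha x (aL D L) * r1.
  have Htw : td w = r1 *: mul (td (aL D L')) (td h).
    by rewrite tmul_td scalerA mulrC hr1 scale1r Ew.
  have [rh Hrh] := cC_C3 s0 (AD_td hH).
  exists (fun s' : bM (Tagged Lam l) => if s'.1 == L' then k * rh s'.2 else 0) => -[K t0].
  have [c [c0 Ec]] := Hrh t0.
  suff -> : mul (td x) (bCp (Tagged Lam l) (L, s0) (K, t0)) -
     \sum_(s' : bM (Tagged Lam l)) (if s'.1 == L' then k * rh s'.2 else 0) *: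
        bCp (Tagged Lam l) s' (K, t0) = k *: Phi L' K (lincomb (C D) c).
    by apply: spnZ; apply: spn_low.
  rewrite -Ec PhiB Phi_sum scalerBr scaler_sumr.
  congr (_ - _).
    rewrite bCE Hmul -/w Htw !tmulZl scalerA.
    by rewrite /Phi !(tmulA opA alphaC).
  rewrite pair_sum (bigD1 L') //= [X in _ + X]big1 => [|L'' nL]; last first.
    by rewrite big1 // => s' _; rewrite (negbTE nL) scale0r.
  rewrite addr0; apply: eq_bigr => s' _.
  by rewrite eqxx PhiZ scalerA.
exists (fun _ => 0) => -[K t0].
rewrite big1 => [|s' _]; last by rewrite scale0r.
rewrite subr0 bCE Hmul -/w; apply: spnZ.
rewrite [C D l s0 t0]fexpand tmul_sumr tmul_suml; apply: spn_sum => g _.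
rewrite tmulZr tmulZl tmul_td tmulZl tmul_td; do 3 apply: spnZ.
set z := op (op w g) (u D K).
have [znD zle] := stay opA stK stM hone hu (x := x) (L := L) (op g (u D K)) wL.
rewrite -/w -opA -/z in znD zle.
apply: (Lspan (D := dcl_of op z)); first exact: mem_dcl_of.
move=> l'; split.
  left; rewrite /dlt zle /=; apply/negP => /eqP E; simpl in E.
  by move: znD; rewrite /= -E mem_dcl_of.
move=> E; have ED := f_equal (@tag _ _) E; simpl in ED, znD.
have zz := mem_dcl_of op z; rewrite ED in zz.
by rewrite zz in znD.
Qed.

Lemma dlt_irr (D : dcl op) : ~~ dlt op (val D) (val D).
Proof. by rewrite /dlt eqxx andbF. Qed.

Lemma bigle_po : [/\ (forall l, bigle leL l l),
              (forall l m, bigle leL l m -> bigle leL m l -> l = m) &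
              (forall l m n, bigle leL l m -> bigle leL m n -> bigle leL l n)].
Proof.
split.
- case=> D l; right; exists D, l, l; split => //.
  by case: (cC_po D) => h _ _; apply: h.
- move=> p q [h1|[D1 [l1 [l2 [E1 E2 le1]]]]] [h2|[D2 [l3 [l4 [E3 E4 le2]]]]].
  + by case: (dlt_asym opA h1 h2).
  + by subst p q; move: h1; rewrite /= (negbTE (dlt_irr D2)).
  + by subst p q; move: h2; rewrite /= (negbTE (dlt_irr D1)).
  + subst p q.
    have eD : D2 = D1 by have := f_equal (@tag _ _) E3.
    subst D2; have e14 := eq_from_Tagged E4; have e23 := eq_from_Tagged E3.
    subst l3 l4; case: (cC_po D1) => _ h _; by rewrite (h _ _ le1 le2).
- move=> p q r [h1|[D1 [l1 [l2 [E1 E2 le1]]]]] [h2|[D2 [l3 [l4 [E3 E4 le2]]]]].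
  + by left; apply: (dlt_trans opA h1 h2).
  + by left; subst q r.
  + by left; subst p q.
  + subst p q r.
    have eD : D2 = D1 by have := f_equal (@tag _ _) E3.
    subst D2; have e := eq_from_Tagged E3; subst l3.
    right; exists D1, l1, l4; split => //; case: (cC_po D1) => _ _ h; exact: h le1 le2.
Qed.

Lemma lincombB (c1 c2 : forall m : bigI, bM m -> bM m -> R) :
  lincomb bC c1 - lincomb bC c2 = lincomb bC (fun m x y => c1 m x y - c2 m x y).
Proof.
rewrite /lincomb -sumrB; apply: eq_bigr => m _.
rewrite -sumrB; apply: eq_bigr => x _; rewrite -sumrB; apply: eq_bigr => y _.
by rewrite scalerBl.
Qed.

Lemma bC_star (p : bigI) (x y : bM p) : star (bCp p x y) = bCp p y x.
Proof.
rewrite !bCE /Phi !(tstarM stM alphaS) !tstar_td stK cC_star.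
by rewrite (tmulA opA alphaC).
Qed.

Lemma main_cell : cellular (fun _ : V => True) mul star (bigle leL) bC.
Proof.
split.
- split.
  + exact: bigle_po.
  + by [].
  + move=> v _; suff [c [_ Ec]] : spn (fun _ => True) v by exists c.
    rewrite [v]fexpand; apply: spn_sum => z _; apply: spnZ.
    apply: (Lspan (D := dcl_of op z)); first exact: mem_dcl_of.
    by [].
  + move=> c1 c2 E m x y; apply/eqP; rewrite -subr_eq0; apply/eqP.
    apply: (big_indep (c := fun m x y => c1 m x y - c2 m x y)).
    by rewrite -lincombB E subrr.
- split.
  + by [].
  + by move=> k a b _ _; rewrite tstarD tstarZ.
  + by move=> a _; rewrite (tstarK stK).
  + by move=> a b _ _; rewrite (tstarM stM alphaS).
  + exact: bC_star.
- move=> l s a _.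
  have : Good s a.
    rewrite [a]fexpand; apply: Good_sum => z _; apply: GoodZ; exact: Good_td.
  case=> r Hr; exists r => t.
  by have [c [c0 Ec]] := Hr t; exists c; split.
Qed.

End Main.

Local Open Scope ring_scope.
Theorem corollary6 (R : comPzRingType) (S : finType) (op : S -> S -> S)
  (st : S -> S) (alpha : S -> S -> R)
  (Lam : dcl op -> finType) (leL : forall D, Lam D -> Lam D -> Prop)
  (M : forall D, Lam D -> finType)
  (C : forall D (l : Lam D), M D l -> M D l -> {ffun S -> R^o})
  (one : dcl op -> S) (u : forall D : dcl op, lcl op (val D) -> S) :
  (forall x y z, op (op x y) z = op x (op y z)) ->
  (forall x, st (st x) = x) ->
  (forall x y, st (op x y) = op (st y) (st x)) ->
  (forall x y z, alpha x y * alpha (op x y) z = alpha x (op y z) * alpha y z) ->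
  (forall x y, alpha x y = alpha (st y) (st x)) ->
  (forall D, [/\ one D \in val D, op (one D) (one D) = one D & st (one D) = one D]) ->
  (forall D x y, Lrel op x (one D) -> Rrel op y (one D) ->
     exists r, alpha x y * r = 1) ->
  (forall D, cellular
     (fun f : {ffun S -> R^o} => forall z, z \notin hclass op (one D) -> f z = 0)
     (tmul op alpha) (tstar st) (leL D) (C D)) ->
  (forall D (L : lcl op (val D)), u D L \in val L /\ Rrel op (u D L) (one D)) ->
  cellular (fun _ : {ffun S -> R^o} => True) (tmul op alpha) (tstar st)
    (bigle leL) (bigC alpha st C u).
Proof.
move=> h1 h2 h3 h4 h5 h6 h7 h8 h9.
exact: (main_cell h1 h2 h3 h4 h5 h6 h7 h8 h9).
Qed.
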